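(* Let $$A=\begin{bmatrix}-1&0&1&0&0&0\\0&-1&0&0&0&0\\0&0&3&0&0&0\\0&0&1&4&0&0\\0&0&0&0&4&0\\0&0&0&0&0&4\end{bmatrix},\qquad B=\begin{bmatrix}0\\1\\1\\0\\0\\1\end{bmatrix}.$$ Then $r_c(A,B)=3$, whereas $\min\{|J|: J\subseteq\{1,\dots,6\},\ (A,[B,I_6(:,J)])\text{ controllable}\}=2$.
   Context: $r_c(A,B)=\min\{\|[\Delta A,\Delta B]\|_0: \Delta A\in\mathbb{R}^{n\times n},\Delta B\in\mathbb{R}^{n\times m},(A+\Delta A,B+\Delta B)\text{ controllable}\}$, where $\|M\|_0$ is the number of nonzero entries of $M$. $I_6(:,J)$ is the submatrix of the $6\times6$ identity formed by columns indexed by $J$. Controllability means $\operatorname{rank}[B,AB,\dots,A^{n-1}B]=n$. *)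

(* Defs.v *)
From HB Require Import structures.
From mathcomp Require Import all_boot all_order all_algebra.
From mathcomp Require Import reals.
Set Implicit Arguments. Unset Strict Implicit. Unset Printing Implicit Defensive.
Import Order.TTheory GRing.Theory Num.Theory.
Local Open Scope ring_scope.

Definition ctrb_mx {F : fieldType} (n m : nat) (A : 'M[F]_n) (B : 'M[F]_(n, m)) :=
  \mxrow_(k < n) (A ^+ k *m B).

Definition controllable {F : fieldType} (n m : nat) (A : 'M[F]_n) (B : 'M[F]_(n, m)) :=
  \rank (ctrb_mx A B) = n.

Definition nnz {F : fieldType} (p q : nat) (M : 'M[F]_(p, q)) : nat :=
  #|[set ij : 'I_p * 'I_q | M ij.1 ij.2 != 0]|.

Definition is_min (P : nat -> Prop) (k : nat) : Prop :=
  P k /\ forall j, P j -> (k <= j)%N.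

Definition rc_eq {F : fieldType} (n m : nat) (A : 'M[F]_n) (B : 'M[F]_(n, m)) (k : nat) :=
  is_min (fun j => exists (dA : 'M[F]_n) (dB : 'M[F]_(n, m)),
            controllable (A + dA) (B + dB) /\ nnz (row_mx dA dB) = j) k.

(* I_n(:,J): columns of the identity indexed by J (in increasing order). *)
Definition idcols (F : fieldType) (n : nat) (J : {set 'I_n}) : 'M[F]_(n, #|J|) :=
  \matrix_(i < n, k < #|J|) (i == enum_val k)%:R.

Definition mx_of_seq (F : fieldType) (p q : nat) (s : seq (seq int)) : 'M[F]_(p, q) :=
  \matrix_(i < p, j < q) (nth 0 (nth [::] s i) j)%:~R.

Definition A7 (R : realType) : 'M[R]_6 := @mx_of_seq R 6 6
  [:: [:: -1; 0; 1; 0; 0; 0];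
      [:: 0; -1; 0; 0; 0; 0];
      [:: 0; 0; 3; 0; 0; 0];
      [:: 0; 0; 1; 4; 0; 0];
      [:: 0; 0; 0; 0; 4; 0];
      [:: 0; 0; 0; 0; 0; 4]]%Z.

Definition B7 (R : realType) : 'M[R]_(6, 1) := @mx_of_seq R 6 1
  [:: [:: 0]; [:: 1]; [:: 1]; [:: 0]; [:: 0]; [:: 1]]%Z.

(* Main.v *)
Require Import Defs.
From HB Require Import structures.
From mathcomp Require Import all_boot all_order all_algebra.
From mathcomp Require Import reals.
From mathcomp Require Import ring lra.
Import Order.TTheory GRing.Theory Num.Theory.
Local Open Scope ring_scope.

Lemma two_of (T : finType) (S : {set T}) (p q r : T) :
  (#|S| <= 2)%N -> p \in S -> q \in S -> r \in S -> p != q -> p != r -> q = r.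
Proof.
move=> hS pS qS rS pq pr; apply/eqP; apply: contraTT hS => qr.
have sub : p |: (q |: [set r]) \subset S.
  by apply/subsetP => x; rewrite !inE => /or3P [] /eqP ->.
have := subset_leq_card sub.
rewrite cardsU1 cardsU1 cards1 !inE negb_or pq pr qr /=.
by move=> h; rewrite -ltnNge; apply: leq_trans h.
Qed.
Arguments two_of {T S p q r}.

Section S.
Variable R : realType.

Lemma unctrl n m (A : 'M[R]_n) (B : 'M[R]_(n, m)) (v : 'rV[R]_n) (l : R) :
  v != 0 -> v *m A = l *: v -> v *m B = 0 -> ~ controllable A B.
Proof.
move=> nz vA vB; rewrite /controllable => hr.
have rf : row_free (ctrb_mx A B) by rewrite /row_free hr.
have pw : forall k, v *m A ^+ k = l ^+ k *: v.
  elim=> [|k IH]; first by rewrite expr0 mulmx1 scale1r.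
  by rewrite exprSr -mulmxE mulmxA IH -scalemxAl vA scalerA -exprSr.
have : v *m ctrb_mx A B = 0 *m ctrb_mx A B.
  rewrite mul0mx /ctrb_mx mul_mxrow -(mxrow0 (q_ := fun _ => m)).
  apply: eq_mxrow => k.
  by rewrite mulmxA pw -scalemxAl vB scaler0.
by move/(row_free_inj rf)=> /eqP; rewrite (negbTE nz).
Qed.

Lemma ctrl_of n m (A : 'M[R]_n) (B : 'M[R]_(n, m)) :
  (forall v : 'rV[R]_n, (forall k, (k < n)%N -> v *m A ^+ k *m B = 0) -> v = 0) ->
  controllable A B.
Proof.
move=> H; rewrite /controllable; apply/eqP; change (row_free (ctrb_mx A B)).
apply/inj_row_free => v hv; apply: H => k hk.
have := congr1 (fun M => submxrow M (Ordinal hk)) hv.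
by rewrite /ctrb_mx mul_mxrow mxrowK submxrow0 mulmxA.
Qed.

Definition rv6 (x0 x1 x2 x3 x4 x5 : R) : 'rV[R]_6 :=
  \row_(i < 6) nth 0 [:: x0; x1; x2; x3; x4; x5] i.

Lemma rv6_nz2 x0 x1 x2 x3 x4 x5 : x2 != 0 -> rv6 x0 x1 x2 x3 x4 x5 != 0.
Proof. by move=> h; apply/eqP => /rowP /(_ (inord 2)); rewrite !mxE inordK //=; apply/eqP. Qed.
Lemma rv6_nz4 x0 x1 x2 x3 x4 x5 : x4 != 0 -> rv6 x0 x1 x2 x3 x4 x5 != 0.
Proof. by move=> h; apply/eqP => /rowP /(_ (inord 4)); rewrite !mxE inordK //=; apply/eqP. Qed.

Lemma A7E (v : 'rV[R]_6) (dA : 'M[R]_6) (c : 'I_6) :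
  (v *m (A7 R + dA)) 0 c = \sum_i v 0 i * (A7 R i c + dA i c).
Proof. by rewrite !mxE; apply: eq_bigr => i _; rewrite !mxE. Qed.

Lemma fin (x0 x1 x2 x3 x4 x5 l : R) (dA : 'M[R]_6) (dB : 'M[R]_(6,1)) :
  rv6 x0 x1 x2 x3 x4 x5 != 0 ->
  (forall c : 'I_6, \sum_(i < 6) nth 0 [:: x0; x1; x2; x3; x4; x5] i * (A7 R i c + dA i c)
     = l * nth 0 [:: x0; x1; x2; x3; x4; x5] c) ->
  (\sum_(i < 6) nth 0 [:: x0; x1; x2; x3; x4; x5] i * (B7 R i 0 + dB i 0) = 0) ->
  ~ controllable (A7 R + dA) (B7 R + dB).
Proof.
move=> nz hA hB; apply: (@unctrl _ _ _ _ _ l nz).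
  apply/rowP => c; rewrite A7E !mxE -hA.
  by apply: eq_bigr => i _; rewrite !mxE.
apply/matrixP => i c; rewrite (ord1 i) (ord1 c) !mxE -[in RHS]hB.
by apply: eq_bigr => k _; rewrite !mxE.
Qed.

Ltac solveA hA := move=> [[|[|[|[|[|[|//]]]]]] ?];
  rewrite !big_ord_recr big_ord0 /= !mxE !hA /= ?mul0r; ring.
Ltac solveB hB := rewrite !big_ord_recr big_ord0 /= !mxE !hB /= ?mul0r; ring.
Ltac nz := first [apply: rv6_nz2; by rewrite ?oner_eq0 ?pnatr_eq0 | apply: rv6_nz4; by rewrite ?oner_eq0 ?pnatr_eq0].
Ltac solveA0 := move=> [[|[|[|[|[|[|//]]]]]] ?];
  rewrite !big_ord_recr big_ord0 /= !mxE /=; ring.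
Ltac solveB0 := rewrite !big_ord_recr big_ord0 /= !mxE /=; ring.
Lemma case4 (dA : 'M[R]_6) (dB : 'M[R]_(6,1)) (j k : nat) (d e : R) :
  (j < 7)%N -> (k < 7)%N ->
  (forall (i c : 'I_6), dA i c = if (i == 4 :> nat) && (c == j :> nat) then d
      else if (i == 2 :> nat) && (c == k :> nat) then e else 0) ->
  (forall i : 'I_6, dB i 0 = if (i == 4 :> nat) && (6 == j) then d
      else if (i == 2 :> nat) && (6 == k) then e else 0) ->
  ~ controllable (A7 R + dA) (B7 R + dB).
Proof.
move=> hj hk hA hB.
case: (eqVneq j 4%N) => [ej|hj4].
  subst j; apply: (@fin 0 0 0 0 1 0 (4 + d)); [nz|solveA hA|solveB hB].
case: (eqVneq k 4%N) => [ek|hk4].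
  subst k; move: hj hj4 hA hB.
  case: j => [|[|[|[|[|[|[|//]]]]]]] _ hn hA hB.
  - apply: (@fin d 0 0 (-d) 5 0 4); [nz|solveA hA|solveB hB].
  - apply: (@fin 0 d 0 0 5 (-d) 4); [nz|solveA hA|solveB hB].
  - apply: (@fin 0 0 0 (-d) 1 0 4); [nz|solveA hA|solveB hB].
  - apply: (@fin (-100-d*e) (-25) 25 (d*e) (-5*e) 0 (-1)); [nz|solveA hA|solveB hB].
  - by move: hn.
  - apply: (@fin (-100) (-25-d*e) 25 0 (-5*e) (d*e) (-1)); [nz|solveA hA|solveB hB].
  - apply: (@fin (-100) (5*d*e-25) 25 0 (-5*e) 0 (-1)); [nz|solveA hA|solveB hB].
move: hk hk4 hA hB.
case: k => [|[|[|[|[|[|[|//]]]]]]] _ hn hA hB.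
- apply: (@fin e 0 5 (5-e) 0 (-5) 4); [nz|solveA hA|solveB hB].
- apply: (@fin 0 e 5 5 0 (-5-e) 4); [nz|solveA hA|solveB hB].
- apply: (@fin 0 0 1 (1-e) 0 (-1) 4); [nz|solveA hA|solveB hB].
- apply: (@fin (e-20) (-5) 5 (-e) 0 0 (-1)); [nz|solveA hA|solveB hB].
- by [].
- apply: (@fin (-20) (e-5) 5 0 0 (-e) (-1)); [nz|solveA hA|solveB hB].
- apply: (@fin (-4) (-1-e) 1 0 0 0 (-1)); [nz|solveA hA|solveB hB].
Qed.

Lemma fin0 (x0 x1 x2 x3 x4 x5 l : R) (dA : 'M[R]_6) (dB : 'M[R]_(6,1)) :
  rv6 x0 x1 x2 x3 x4 x5 != 0 ->
  (forall i : 'I_6, nth 0 [:: x0; x1; x2; x3; x4; x5] i != 0 ->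
     (forall c, dA i c = 0) /\ dB i 0 = 0) ->
  (forall c : 'I_6, \sum_(i < 6) nth 0 [:: x0; x1; x2; x3; x4; x5] i * (A7 R i c + 0)
     = l * nth 0 [:: x0; x1; x2; x3; x4; x5] c) ->
  (\sum_(i < 6) nth 0 [:: x0; x1; x2; x3; x4; x5] i * (B7 R i 0 + 0) = 0) ->
  ~ controllable (A7 R + dA) (B7 R + dB).
Proof.
move=> nz hz hA hB; apply: (@fin _ _ _ _ _ _ l dA dB nz).
  move=> c; rewrite -hA; apply: eq_bigr => i _.
  case: (eqVneq (nth 0 [:: x0; x1; x2; x3; x4; x5] i) 0) => [->|h]; first by rewrite !mul0r.
  by rewrite (proj1 (hz i h) c).
rewrite -[in RHS]hB; apply: eq_bigr => i _.
case: (eqVneq (nth 0 [:: x0; x1; x2; x3; x4; x5] i) 0) => [->|h]; first by rewrite !mul0r.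
by rewrite (proj2 (hz i h)).
Qed.

Lemma lower (dA : 'M[R]_6) (dB : 'M[R]_(6,1)) :
  (nnz (row_mx dA dB) <= 2)%N -> ~ controllable (A7 R + dA) (B7 R + dB).
Proof.
rewrite /nnz => hS.
set M := row_mx dA dB in hS.
have eA : forall i c, dA i c = M i (lshift 1 c) by move=> i c; rewrite /M row_mxEl.
have eB : forall i, dB i 0 = M i (rshift 6 0) by move=> i; rewrite /M row_mxEr.
pose z (r : nat) := [forall c, M (inord r) c == 0].
have zP : forall r : 'I_6, z r -> (forall c, dA r c = 0) /\ dB r 0 = 0.
  move=> r /forallP h; have er : inord r = r by apply/val_inj; rewrite /= inordK.
  by split => [c|]; [rewrite eA | rewrite eB]; apply/eqP; rewrite -er; apply: h.
case: (boolP (z 4%N)) => [h4|h4].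
  apply: (@fin0 0 0 0 0 1 0 4); [nz| |solveA0|solveB0].
  move=> [[|[|[|[|[|[|//]]]]]] ?] /= hn; first [by move: hn; rewrite eqxx | (apply: zP; exact: h4)].
case: (boolP [&& z 2%N, z 3%N & z 5%N]) => [/and3P [h2 h3 h5] | h235].
  apply: (@fin0 0 0 1 1 0 (-1) 4); [nz| |solveA0|solveB0].
  move=> [[|[|[|[|[|[|//]]]]]] ?] /= hn;
    first [by move: hn; rewrite eqxx | (apply: zP; exact: h2) | (apply: zP; exact: h3) | (apply: zP; exact: h5)].
case: (boolP [&& z 0%N, z 1%N & z 2%N]) => [/and3P [h0 h1 h2] | h012].
  apply: (@fin0 (-4) (-1) 1 0 0 0 (-1)); [nz| |solveA0|solveB0].
  move=> [[|[|[|[|[|[|//]]]]]] ?] /= hn;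
    first [by move: hn; rewrite eqxx | (apply: zP; exact: h0) | (apply: zP; exact: h1) | (apply: zP; exact: h2)].

have [r1 [c1 [hr1 hc1]]] : exists r1 c1, (r1 \in [:: 2; 3; 5]%N) /\ M (inord r1) c1 != 0.
  move: h235; rewrite !negb_and => /or3P [] /forallPn [c hc];
    [exists 2%N | exists 3%N | exists 5%N]; exists c; by split.
have [r2 [c2 [hr2 hc2]]] : exists r2 c2, (r2 \in [:: 0; 1; 2]%N) /\ M (inord r2) c2 != 0.
  move: h012; rewrite !negb_and => /or3P [] /forallPn [c hc];
    [exists 0%N | exists 1%N | exists 2%N]; exists c; by split.
move/forallPn: h4 => [c4 hc4].
have vr1 : ((inord r1 : 'I_6) : nat) = r1.
  by rewrite inordK //; move: hr1; rewrite !inE => /or3P [] /eqP ->.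
have vr2 : ((inord r2 : 'I_6) : nat) = r2.
  by rewrite inordK //; move: hr2; rewrite !inE => /or3P [] /eqP ->.
have v4 : ((inord 4 : 'I_6) : nat) = 4%N by rewrite inordK.
set S := [set ij | M ij.1 ij.2 != 0] in hS.
have pS : (inord 4, c4) \in S by rewrite inE.
have qS : (inord r1, c1) \in S by rewrite inE.
have rS : (inord r2, c2) \in S by rewrite inE.
have pq : (inord 4, c4) != (inord r1, c1) :> 'I_6 * 'I_7.
  apply/negP => /eqP [] /(congr1 val) e41 _; move: e41; rewrite /= v4 vr1 => e41.
  by move: hr1; rewrite -e41.
have pr : (inord 4, c4) != (inord r2, c2) :> 'I_6 * 'I_7.
  apply/negP => /eqP [] /(congr1 val) e42 _; move: e42; rewrite /= v4 vr2 => e42.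
  by move: hr2; rewrite -e42.
have e := two_of hS pS qS rS pq pr.
case: e => /(congr1 val) e12 _; move: e12; rewrite /= vr1 vr2 => e12; subst r2.
have r12 : r1 = 2%N.
  by move: hr1 hr2; rewrite !inE => /or3P [] /eqP -> //; rewrite ?orbF.
subst r1.
have hM : forall i c, M i c != 0 -> (i, c) = (inord 4, c4) \/ (i, c) = (inord 2, c1).
  move=> i c hic; case: (eqVneq (i, c) (inord 4, c4)) => [->|hne]; first by left.
  have hne' : (inord 4, c4) != (i, c) by rewrite eq_sym.
  have icS : (i, c) \in S by rewrite inE.
  by right; apply/esym; apply: (two_of hS pS qS icS pq hne').
apply: (@case4 dA dB c4 c1 (M (inord 4) c4) (M (inord 2) c1) (ltn_ord c4) (ltn_ord c1)).
  move=> i c; rewrite eA.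
  case: ifP => [/andP [/eqP hi /eqP hc] | h1].
    by congr (M _ _); apply/val_inj; rewrite /= ?inordK.
  case: ifP => [/andP [/eqP hi /eqP hc] | h2].
    by congr (M _ _); apply/val_inj; rewrite /= ?inordK.
  apply/eqP; apply/negPn/negP => /hM [] [ei ec].
    by move: h1; rewrite ei v4 -ec /= !eqxx.
  by move: h2; rewrite ei vr1 -ec /= !eqxx.
move=> i; rewrite eB.
case: ifP => [/andP [/eqP hi /eqP hc] | h1].
  by congr (M _ _); apply/val_inj; rewrite /= ?inordK.
case: ifP => [/andP [/eqP hi /eqP hc] | h2].
  by congr (M _ _); apply/val_inj; rewrite /= ?inordK.
apply/eqP; apply/negPn/negP => /hM [] [ei ec].
  by move: h1; rewrite ei v4 -ec /= !eqxx.
by move: h2; rewrite ei vr1 -ec /= !eqxx.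
Qed.


Lemma rv6_eta (v : 'rV[R]_6) :
  v = rv6 (v 0 (inord 0)) (v 0 (inord 1)) (v 0 (inord 2)) (v 0 (inord 3)) (v 0 (inord 4)) (v 0 (inord 5)).
Proof.
apply/rowP => -[[|[|[|[|[|[|//]]]]]] ?]; rewrite mxE /=;
  by congr (v _ _); apply/val_inj; rewrite /= inordK.
Qed.

Lemma rv6_eq0 x0 x1 x2 x3 x4 x5 :
  x0 = 0 -> x1 = 0 -> x2 = 0 -> x3 = 0 -> x4 = 0 -> x5 = 0 -> rv6 x0 x1 x2 x3 x4 x5 = 0.
Proof.
move=> -> -> -> -> -> ->; apply/rowP => -[[|[|[|[|[|[|//]]]]]] ?]; by rewrite !mxE.
Qed.

Lemma pwS n (A : 'M[R]_n) (v : 'rV[R]_n) k : v *m A ^+ k.+1 = (v *m A ^+ k) *m A.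
Proof. by rewrite exprSr -mulmxE mulmxA. Qed.

Definition dAex : 'M[R]_6 := \matrix_(i < 6, j < 6)
  ((((i == 2 :> nat) && (j == 3 :> nat)) || ((i == 3 :> nat) && (j == 4 :> nat))
    || ((i == 4 :> nat) && (j == 0 :> nat)) : nat)%:R).

Lemma rv6_Aex x0 x1 x2 x3 x4 x5 :
  rv6 x0 x1 x2 x3 x4 x5 *m (A7 R + dAex) =
  rv6 (x4 - x0) (-x1) (x0+3*x2+x3) (4*x3+x2) (4*x4+x3) (4*x5).
Proof.
apply/rowP => -[[|[|[|[|[|[|//]]]]]] ?];
  rewrite !mxE !big_ord_recr big_ord0 /= !mxE /=; ring.
Qed.

Lemma rv6_B x0 x1 x2 x3 x4 x5 (dB : 'M[R]_(6,1)) : dB = 0 ->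
  (rv6 x0 x1 x2 x3 x4 x5 *m (B7 R + dB)) 0 0 = x1 + x2 + x5.
Proof.
move=> ->; rewrite !mxE !big_ord_recr big_ord0 /= !mxE /=; ring.
Qed.

Lemma ctrl_ex : controllable (A7 R + dAex) (B7 R + 0).
Proof.
apply: ctrl_of => v H.
have E k (hk : (k < 6)%N) := congr1 (fun M : 'M[R]_(1,1) => M 0 0) (H k hk).
have E0 := E 0%N erefl; have E1 := E 1%N erefl; have E2 := E 2%N erefl.
have E3 := E 3%N erefl; have E4 := E 4%N erefl; have E5 := E 5%N erefl.
move: E0 E1 E2 E3 E4 E5; rewrite !pwS expr0 mulmx1 (rv6_eta v) !rv6_Aex !rv6_B // !mxE.
set x0 := v 0 _; set x1 := v 0 _; set x2 := v 0 _; set x3 := v 0 _; set x4 := v 0 _;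
  set x5 := v 0 _ => E0 E1 E2 E3 E4 E5.
by apply: rv6_eq0; lra.
Qed.

Lemma nnz_ex : nnz (row_mx dAex (0 : 'M[R]_(6,1))) = 3%N.
Proof.
rewrite /nnz.
have -> : [set ij | row_mx dAex (0 : 'M[R]_(6,1)) ij.1 ij.2 != 0] =
   (inord 2, inord 3) |: ((inord 3, inord 4) |: [set (inord 4, inord 0)]) :> {set 'I_6 * 'I_7}.
  apply/setP => -[i c]; rewrite !inE /= !xpair_eqE -!val_eqE /= !inordK //.
  case: (@splitP 6 1 c) => [c' hc | c' hc].
    have -> : c = lshift 1 c' by apply/val_inj.
    rewrite row_mxEl mxE pnatr_eq0 /=.
    by case: i => -[|[|[|[|[|[|//]]]]]] ?; case: c' {hc} => -[|[|[|[|[|[|//]]]]]] ?.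
  have -> : c = rshift 6 c' by apply/val_inj.
  rewrite row_mxEr mxE eqxx /=.
  by case: i => -[|[|[|[|[|[|//]]]]]] ?; rewrite /= ?andbF.
by rewrite !cardsU1 cards1 !inE !xpair_eqE -!val_eqE /= !inordK.
Qed.

Lemma rv6_A7 x0 x1 x2 x3 x4 x5 :
  rv6 x0 x1 x2 x3 x4 x5 *m A7 R = rv6 (-x0) (-x1) (x0+3*x2+x3) (4*x3) (4*x4) (4*x5).
Proof.
apply/rowP => -[[|[|[|[|[|[|//]]]]]] ?];
  rewrite !mxE !big_ord_recr big_ord0 /= !mxE /=; ring.
Qed.

Lemma rv6_B7 x0 x1 x2 x3 x4 x5 :
  (rv6 x0 x1 x2 x3 x4 x5 *m B7 R) 0 0 = x1 + x2 + x5.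
Proof. rewrite !mxE !big_ord_recr big_ord0 /= !mxE /=; ring. Qed.

Lemma idcols_v (w : 'rV[R]_6) (J : {set 'I_6}) :
  w *m idcols R J = 0 -> forall i, i \in J -> w 0 i = 0.
Proof.
move=> h i iJ; have := congr1 (fun M : 'M[R]_(1, #|J|) => M 0 (enum_rank_in iJ i)) h.
rewrite !mxE; under eq_bigr => l _ do rewrite mxE enum_rankK_in //.
rewrite (bigD1 i) //= eqxx mulr1 big1 ?addr0 // => l /negbTE hl.
by rewrite hl mulr0.
Qed.

Lemma vanish_idcols (w : 'rV[R]_6) (J : {set 'I_6}) :
  (forall i, i \in J -> w 0 i = 0) -> w *m idcols R J = 0.
Proof.
move=> h; apply/rowP => k; rewrite !mxE; under eq_bigr => l _ do rewrite mxE.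
rewrite (bigD1 (enum_val k)) //= eqxx mulr1.
rewrite h ?enum_valP // add0r big1 // => l /negbTE hl; by rewrite hl mulr0.
Qed.

Lemma split_eq (w : 'rV[R]_6) (J : {set 'I_6}) :
  w *m row_mx (B7 R) (idcols R J) = 0 ->
  (w *m B7 R) 0 0 = 0 /\ (forall i, i \in J -> w 0 i = 0).
Proof.
rewrite mul_mx_row -row_mx0 => /eq_row_mx [h1 h2]; split; first by rewrite h1 mxE.
exact: idcols_v.
Qed.

Lemma rv6_at x0 x1 x2 x3 x4 x5 k : (k < 6)%N ->
  rv6 x0 x1 x2 x3 x4 x5 0 (inord k) = nth 0 [:: x0; x1; x2; x3; x4; x5] k.
Proof. by move=> hk; rewrite mxE inordK. Qed.

Lemma ctrl_J : controllable (A7 R) (row_mx (B7 R) (idcols R [set inord 2; inord 4])).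
Proof.
apply: ctrl_of => v H.
have E k (hk : (k < 6)%N) := @split_eq _ _ (H k hk).
have [E0 F0] := E 0%N erefl; have [E1 F1] := E 1%N erefl; have [E2 F2] := E 2%N erefl.
have G0 := F0 (inord 2) (setU11 _ _); have G0' := F0 (inord 4) (setU1r _ (set11 _)).
have G1 := F1 (inord 2) (setU11 _ _); have G1' := F1 (inord 4) (setU1r _ (set11 _)).
have G2 := F2 (inord 2) (setU11 _ _).
move: E0 E1 E2 G0 G0' G1 G1' G2.
rewrite !pwS expr0 mulmx1 (rv6_eta v) !rv6_A7 !rv6_B7 ?rv6_at //=.
set x0 := v 0 _; set x1 := v 0 _; set x2 := v 0 _; set x3 := v 0 _; set x4 := v 0 _;
  set x5 := v 0 _ => E0 E1 E2 G0 G0' G1 G1' G2.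
by apply: rv6_eq0; lra.
Qed.

Lemma lowerJ (J : {set 'I_6}) : (#|J| <= 1)%N ->
  ~ controllable (A7 R) (row_mx (B7 R) (idcols R J)).
Proof.
move=> hJ.
have uc : forall x0 x1 x2 x3 x4 x5 l, rv6 x0 x1 x2 x3 x4 x5 != 0 ->
    rv6 x0 x1 x2 x3 x4 x5 *m A7 R = l *: rv6 x0 x1 x2 x3 x4 x5 ->
    x1 + x2 + x5 = 0 ->
    (forall i, i \in J -> rv6 x0 x1 x2 x3 x4 x5 0 i = 0) ->
    ~ controllable (A7 R) (row_mx (B7 R) (idcols R J)).
  move=> x0 x1 x2 x3 x4 x5 l nz hA hB hJ0; apply: (@unctrl _ _ _ _ _ l nz hA).
  rewrite mul_mx_row vanish_idcols // -row_mx0; congr row_mx.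
  by apply/matrixP => i c; rewrite (ord1 i) (ord1 c) rv6_B7 hB mxE.
case: (boolP (inord 4 \in J)) => h4.
  apply: (@uc 0 0 1 1 0 (-1) 4); [nz| |ring|].
    by rewrite rv6_A7; apply/rowP => -[[|[|[|[|[|[|//]]]]]] ?]; rewrite !mxE /=; ring.
  move=> i iJ; have -> : i = inord 4.
    apply/eqP; apply: contraTT hJ => hne; rewrite -ltnNge.
    have sub : [set i; inord 4] \subset J.
      by apply/subsetP => x; rewrite !inE => /orP [] /eqP ->.
    by apply: leq_trans (subset_leq_card sub); rewrite cards2 hne.
  by rewrite rv6_at.
apply: (@uc 0 0 0 0 1 0 4); [nz| |ring|].
  by rewrite rv6_A7; apply/rowP => -[[|[|[|[|[|[|//]]]]]] ?]; rewrite !mxE /=; ring.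
move=> i iJ; have : i != inord 4 by apply: contraNneq h4 => <-.
case: i {iJ} => -[|[|[|[|[|[|//]]]]]] ? hne; rewrite mxE //=.
by move: hne; rewrite -val_eqE /= inordK.
Qed.

End S.

Theorem mainTheorem7 (R : realType) :
  rc_eq (A7 R) (B7 R) 3 /\
  is_min (fun k => exists J : {set 'I_6},
            #|J| = k /\ controllable (A7 R) (row_mx (B7 R) (idcols R J))) 2.
Proof.
split; split.
- by exists (dAex R), 0; split; [exact: ctrl_ex | exact: nnz_ex].
- move=> j [dA [dB [hc hn]]]; rewrite leqNgt; apply/negP => hj.
  by apply: (@lower R dA dB _ hc); rewrite hn -ltnS.
- exists [set inord 2; inord 4]; split; last exact: ctrl_J.
  by rewrite cards2 -val_eqE /= !inordK.
- move=> j [J [hJ hc]]; rewrite leqNgt; apply/negP => hj.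
  by apply: (@lowerJ R J _ hc); rewrite hJ -ltnS.
Qed.
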